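(* Let $\mathbb{F}$ be a field of characteristic $2$, $V$ a $4$-dimensional vector space over $\mathbb{F}$, $W=\bigwedge^2V$, and fix an isomorphism $\chi:\bigwedge^4V\to\mathbb{F}$. Let $w,x,y,z\in V$ with $\chi(w\wedge x\wedge y\wedge z)=1$. Then the element $U=(w\wedge x)(y\wedge z)+(w\wedge y)(z\wedge x)+(w\wedge z)(x\wedge y)$ of $S_2(W)$ does not depend on the choice of $w,x,y,z$, and it is fixed under the induced action of $\mathrm{SL}(V)$.
   Context: $S_2(W)=(W\otimes W)/\langle a\otimes b-b\otimes a\rangle$ is the symmetric square of $W$; the image of $a\otimes b$ is written $ab$. $\mathrm{SL}(V)$ acts naturally on $W$ and hence on $S_2(W)$. *)

(* Defs.v *)
From HB Require Import structures.
From mathcomp Require Import all_boot all_order all_algebra.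
Set Implicit Arguments. Unset Strict Implicit. Unset Printing Implicit Defensive.
Import GRing.Theory.
Local Open Scope ring_scope.

(* V = F^4, realised as row vectors 'rV[F]_4; a matrix g acts by v |-> v *m g. *)

Definition pidx := {p : 'I_4 * 'I_4 | (p.1 < p.2)%N}.

Section Ext.
Variable F : fieldType.

(* W = /\^2 V, in coordinates w.r.t. the basis e_i /\ e_j, i < j. *)
Local Notation W := {ffun pidx -> F}.

Definition wedge2 (v u : 'rV[F]_4) : W :=
  [ffun p => v 0 (val p).1 * u 0 (val p).2 - v 0 (val p).2 * u 0 (val p).1].

(* /\^4 V identified with F via w/\x/\y/\z |-> det of the matrix with rows
   w, x, y, z (the determinant is the universal alternating 4-form). *)
Definition rows4 (w x y z : 'rV[F]_4) : 'M[F]_4 :=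
  \matrix_(i < 4, j < 4) (nth w [:: w; x; y; z] i) 0 j.
Definition wedge4 (w x y z : 'rV[F]_4) : F := \det (rows4 w x y z).

(* W (x) W, in coordinates w.r.t. the basis b_p (x) b_q. *)
Local Notation WW := {ffun pidx * pidx -> F}.
Definition tens (a b : W) : WW := [ffun q => a q.1 * b q.2].

(* S_2(W) = (W (x) W) / < a(x)b - b(x)a > : two tensors represent the same
   element of S_2(W) iff their difference lies in the span of the a(x)b-b(x)a. *)
Definition S2eq (t t' : WW) : Prop :=
  exists s : seq (W * W),
    t - t' = \sum_(ab <- s) (tens ab.1 ab.2 - tens ab.2 ab.1).

(* the induced action of g on W: (/\^2 g)(e_i /\ e_j) = (e_i g) /\ (e_j g) *)
Definition act2 (g : 'M[F]_4) (a : W) : W :=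
  [ffun r => \sum_(p : pidx) a p * wedge2 (row (val p).1 g) (row (val p).2 g) r].

Definition actWW (g : 'M[F]_4) (t : WW) : WW :=
  [ffun r => \sum_(q : pidx * pidx) t q *
     tens (wedge2 (row (val q.1).1 g) (row (val q.1).2 g))
          (wedge2 (row (val q.2).1 g) (row (val q.2).2 g)) r].

Definition Urep (w x y z : 'rV[F]_4) : WW :=
  tens (wedge2 w x) (wedge2 y z) + tens (wedge2 w y) (wedge2 z x)
  + tens (wedge2 w z) (wedge2 x y).

End Ext.

(* Main.v *)
Require Import Defs.
From HB Require Import structures.
From mathcomp Require Import all_boot all_order all_algebra.
From mathcomp Require Import ring.
Import GRing.Theory.
Local Open Scope ring_scope.

Definition o0 : 'I_4 := Ordinal (isT : (0 < 4)%N).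
Definition o1 : 'I_4 := Ordinal (isT : (1 < 4)%N).
Definition o2 : 'I_4 := Ordinal (isT : (2 < 4)%N).
Definition o3 : 'I_4 := Ordinal (isT : (3 < 4)%N).
Definition p01 : pidx := exist _ (o0, o1) isT.
Definition p02 : pidx := exist _ (o0, o2) isT.
Definition p03 : pidx := exist _ (o0, o3) isT.
Definition p12 : pidx := exist _ (o1, o2) isT.
Definition p13 : pidx := exist _ (o1, o3) isT.
Definition p23 : pidx := exist _ (o2, o3) isT.

Ltac tp p q := have -> : p = q by apply/val_inj; rewrite /= /o0 /o1 /o2 /o3; congr pair; apply/val_inj.

Lemma pidx_ind (P : pidx -> Prop) :
  P p01 -> P p02 -> P p03 -> P p12 -> P p13 -> P p23 -> forall p, P p.
Proof.
move=> H01 H02 H03 H12 H13 H23 [[[i hi] [j hj]] h].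
case: i hi h => [|[|[|[|i]]]] hi h //;
case: j hj h => [|[|[|[|j]]]] hj h //.
all: match goal with |- _ ?q => set p := q end.
all: first [ tp p p01; done | tp p p02; done | tp p p03; done | tp p p12; done | tp p p13; done | tp p p23; done ].
Qed.

Section Main.
Variable F : fieldType.
Definition mc (A : 'M[F]_4) (i j : nat) :=
  A (nth o0 [:: o0; o1; o2; o3] i) (nth o0 [:: o0; o1; o2; o3] j).
Lemma ordE (i : 'I_4) : i = nth o0 [:: o0; o1; o2; o3] i.
Proof. by apply/val_inj; case: i => [[|[|[|[|i]]]] hi]. Qed.
Lemma mcE (A : 'M[F]_4) (i j : 'I_4) : A i j = mc A i j.
Proof. by rewrite /mc -!ordE. Qed.
Lemma det4 (A : 'M[F]_4) : \det A = 0 + A o0 o0*A o1 o1*A o2 o2*A o3 o3 - A o0 o0*A o1 o1*A o2 o3*A o3 o2 - A o0 o0*A o1 o2*A o2 o1*A o3 o3 + A o0 o0*A o1 o2*A o2 o3*A o3 o1 + A o0 o0*A o1 o3*A o2 o1*A o3 o2 - A o0 o0*A o1 o3*A o2 o2*A o3 o1 - A o0 o1*A o1 o0*A o2 o2*A o3 o3 + A o0 o1*A o1 o0*A o2 o3*A o3 o2 + A o0 o1*A o1 o2*A o2 o0*A o3 o3 - A o0 o1*A o1 o2*A o2 o3*A o3 o0 - A o0 o1*A o1 o3*A o2 o0*A o3 o2 + A o0 o1*A o1 o3*A o2 o2*A o3 o0 + A o0 o2*A o1 o0*A o2 o1*A o3 o3 - A o0 o2*A o1 o0*A o2 o3*A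 o3 o1 - A o0 o2*A o1 o1*A o2 o0*A o3 o3 + A o0 o2*A o1 o1*A o2 o3*A o3 o0 + A o0 o2*A o1 o3*A o2 o0*A o3 o1 - A o0 o2*A o1 o3*A o2 o1*A o3 o0 - A o0 o3*A o1 o0*A o2 o1*A o3 o2 + A o0 o3*A o1 o0*A o2 o2*A o3 o1 + A o0 o3*A o1 o1*A o2 o0*A o3 o2 - A o0 o3*A o1 o1*A o2 o2*A o3 o0 - A o0 o3*A o1 o2*A o2 o0*A o3 o1 + A o0 o3*A o1 o2*A o2 o1*A o3 o0.
Proof.
do 4! rewrite ?(expand_det_row _ ord0) ?big_ord_recr ?big_ord0 /cofactor /=.
rewrite ?det_mx00 !mxE !mcE.
cbv [bump nat_of_ord lift ord0 widen_ord ord_max leq subn subn_rec addn addn_rec eq_op Equality.sort].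
rewrite /mc /=.
ring.
Qed.

Definition delta (c : F) (p : pidx) : {ffun pidx -> F} := [ffun r => c * (r == p)%:R].
Definition ltp (pq : pidx * pidx) := (enum_rank pq.1 < enum_rank pq.2)%N.

Lemma pick_sum (e : pidx * pidx -> F) (r t : pidx) :
  \sum_(pq : pidx * pidx) (r == pq.1)%:R * ((t == pq.2)%:R * e pq) = e (r, t).
Proof.
rewrite (bigD1 (r, t)) //= !eqxx !mul1r big1 ?addr0 // => -[p q] /=.
case: (eqVneq r p) => [->|_]; last by rewrite mulr0n mul0r.
case: (eqVneq t q) => [->|_]; last by rewrite mulr0n mul0r mulr0.
by rewrite eqxx.
Qed.
Lemma alt_sum (d : {ffun pidx * pidx -> F}) :
  (forall p, d (p, p) = 0) -> (forall p q, d (q, p) = - d (p, q)) ->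
  exists s : seq ({ffun pidx -> F} * {ffun pidx -> F}),
    d = \sum_(ab <- s) (tens ab.1 ab.2 - tens ab.2 ab.1).
Proof.
move=> d0 dA.
exists [seq (delta 1 pq.1, delta (if ltp pq then d pq else 0) pq.2) | pq : pidx * pidx <- index_enum _].
apply/ffunP => -[r t]; rewrite big_map sum_ffunE.
set e := fun pq => if ltp pq then d pq else 0.
rewrite (eq_bigr (fun i => (r == i.1)%:R * ((t == i.2)%:R * e i) - (t == i.1)%:R * ((r == i.2)%:R * e i))); last first.
  by move=> i _; rewrite !ffunE /=; rewrite /e; ring.
rewrite sumrB !pick_sum /e /ltp /=.
case: (ltngtP (enum_rank r) (enum_rank t)) => [_|_|/val_inj/enum_rank_inj ->].
- by rewrite subr0.
- by rewrite sub0r dA.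
- by rewrite d0 subr0.
Qed.


Lemma wedge2E (v u : 'rV[F]_4) p :
  wedge2 v u p = v 0 (val p).1 * u 0 (val p).2 - v 0 (val p).2 * u 0 (val p).1.
Proof. by rewrite ffunE. Qed.

Lemma UrepE (w x y z : 'rV[F]_4) p q : Urep w x y z (p, q) =
  wedge2 w x p * wedge2 y z q + wedge2 w y p * wedge2 z x q + wedge2 w z p * wedge2 x y q.
Proof. by rewrite !ffunE. Qed.

Lemma wedge4E (w x y z : 'rV[F]_4) : wedge4 w x y z =
  0 + w 0 o0 * x 0 o1 * y 0 o2 * z 0 o3 - w 0 o0 * x 0 o1 * y 0 o3 * z 0 o2 -
   w 0 o0 * x 0 o2 * y 0 o1 * z 0 o3 + w 0 o0 * x 0 o2 * y 0 o3 * z 0 o1 +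
   w 0 o0 * x 0 o3 * y 0 o1 * z 0 o2 - w 0 o0 * x 0 o3 * y 0 o2 * z 0 o1 -
   w 0 o1 * x 0 o0 * y 0 o2 * z 0 o3 + w 0 o1 * x 0 o0 * y 0 o3 * z 0 o2 +
   w 0 o1 * x 0 o2 * y 0 o0 * z 0 o3 - w 0 o1 * x 0 o2 * y 0 o3 * z 0 o0 -
   w 0 o1 * x 0 o3 * y 0 o0 * z 0 o2 + w 0 o1 * x 0 o3 * y 0 o2 * z 0 o0 +
   w 0 o2 * x 0 o0 * y 0 o1 * z 0 o3 - w 0 o2 * x 0 o0 * y 0 o3 * z 0 o1 -
   w 0 o2 * x 0 o1 * y 0 o0 * z 0 o3 + w 0 o2 * x 0 o1 * y 0 o3 * z 0 o0 +
   w 0 o2 * x 0 o3 * y 0 o0 * z 0 o1 - w 0 o2 * x 0 o3 * y 0 o1 * z 0 o0 -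
   w 0 o3 * x 0 o0 * y 0 o1 * z 0 o2 + w 0 o3 * x 0 o0 * y 0 o2 * z 0 o1 +
   w 0 o3 * x 0 o1 * y 0 o0 * z 0 o2 - w 0 o3 * x 0 o1 * y 0 o2 * z 0 o0 -
   w 0 o3 * x 0 o2 * y 0 o0 * z 0 o1 + w 0 o3 * x 0 o2 * y 0 o1 * z 0 o0.
Proof. by rewrite /wedge4 det4 /rows4 !mxE. Qed.

Lemma UrepE2 (w x y z : 'rV[F]_4) p q : Urep w x y z (p, q) =
  (w 0 (val p).1 * x 0 (val p).2 - w 0 (val p).2 * x 0 (val p).1) * (y 0 (val q).1 * z 0 (val q).2 - y 0 (val q).2 * z 0 (val q).1)
 + (w 0 (val p).1 * y 0 (val p).2 - w 0 (val p).2 * y 0 (val p).1) * (z 0 (val q).1 * x 0 (val q).2 - z 0 (val q).2 * x 0 (val q).1)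
 + (w 0 (val p).1 * z 0 (val p).2 - w 0 (val p).2 * z 0 (val p).1) * (x 0 (val q).1 * y 0 (val q).2 - x 0 (val q).2 * y 0 (val q).1).
Proof. by rewrite UrepE !wedge2E. Qed.
Definition SymP p q := exists k : F, forall w x y z : 'rV[F]_4,
  Urep w x y z (p, q) + Urep w x y z (q, p) = k * wedge4 w x y z.
Lemma Usym p q : SymP p q.
Proof.
elim/pidx_ind: p; elim/pidx_ind: q;
match goal with |- SymP ?p ?q =>
  rewrite /SymP; lazymatch constr:((p, q)) with
  | (p01, p23) => exists 1 | (p23, p01) => exists 1
  | (p02, p13) => exists (-1) | (p13, p02) => exists (-1)
  | (p03, p12) => exists 1 | (p12, p03) => exists 1
  | _ => exists 0 end end.
all: 
move=> w x y z; rewrite wedge4E !UrepE2 /=; ring.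
Qed.
Lemma Udiag p (w x y z : 'rV[F]_4) : Urep w x y z (p, p) = 0.
Proof.
elim/pidx_ind: p; rewrite UrepE2 /=; ring.
Qed.

Lemma ffunB' (f g : {ffun pidx * pidx -> F}) q : (f - g) q = f q - g q.
Proof. by rewrite !ffunE. Qed.

Lemma S2core (w x y z w' x' y' z' : 'rV[F]_4) :
  wedge4 w x y z = wedge4 w' x' y' z' -> S2eq (Urep w x y z) (Urep w' x' y' z').
Proof.
move=> eD; rewrite /S2eq; apply: alt_sum => [p|p q].
  by rewrite ffunB' !Udiag subr0.
have [k hk] := Usym p q.
move: (hk w x y z) (hk w' x' y' z'); rewrite -eD !ffunB' => h1 h2.
set a := Urep w x y z (p, q) in h1 *; set b := Urep w x y z (q, p) in h1 *.
set a' := Urep w' x' y' z' (p, q) in h2 *; set b' := Urep w' x' y' z' (q, p) in h2 *.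
have eb : b = k * wedge4 w x y z - a by rewrite -h1 [a + b]addrC addrK.
have eb' : b' = k * wedge4 w x y z - a' by rewrite -h2 [a' + b']addrC addrK.
rewrite eb eb'; ring.
Qed.


Lemma sum_pidx (f : pidx -> F) :
  \sum_(p : pidx) f p = f p01 + f p02 + f p03 + f p12 + f p13 + f p23.
Proof.
rewrite (perm_big [:: p01; p02; p03; p12; p13; p23]) /=.
  by rewrite !big_cons big_nil addr0 !addrA.
apply: uniq_perm; first exact: index_enum_uniq.
  by [].
by move=> p; rewrite mem_index_enum; elim/pidx_ind: p.
Qed.

Lemma sum_ord4 (f : 'I_4 -> F) :
  \sum_(i < 4) f i = f o0 + f o1 + f o2 + f o3.
Proof.
rewrite (perm_big [:: o0; o1; o2; o3]) /=.
  by rewrite !big_cons big_nil addr0 !addrA.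
apply: uniq_perm; first exact: index_enum_uniq.
  by [].
by move=> i; rewrite mem_index_enum; case: i => [[|[|[|[|i]]]] hi].
Qed.

Lemma mulrowE (v : 'rV[F]_4) (g : 'M[F]_4) j :
  (v *m g) 0 j = v 0 o0 * g o0 j + v 0 o1 * g o1 j + v 0 o2 * g o2 j + v 0 o3 * g o3 j.
Proof. by rewrite mxE sum_ord4. Qed.

Lemma act2_wedge (g : 'M[F]_4) (v u : 'rV[F]_4) :
  act2 g (wedge2 v u) = wedge2 (v *m g) (u *m g).
Proof.
apply/ffunP => r; rewrite ffunE sum_pidx !wedge2E !mulrowE !mxE.
by elim/pidx_ind: r; rewrite /=; ring.
Qed.


Lemma actWW_tens (g : 'M[F]_4) (a b : {ffun pidx -> F}) :
  actWW g (tens a b) = tens (act2 g a) (act2 g b).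
Proof.
apply/ffunP => -[r t]; rewrite !ffunE /= big_distrlr /= pair_big /=.
apply: eq_bigr => -[p q] _; by rewrite !ffunE /=; ring.
Qed.

Lemma actWW_add (g : 'M[F]_4) (t1 t2 : {ffun pidx * pidx -> F}) :
  actWW g (t1 + t2) = actWW g t1 + actWW g t2.
Proof.
apply/ffunP => r; rewrite !ffunE -big_split /=.
by apply: eq_bigr => q _; rewrite !ffunE mulrDl.
Qed.

Lemma actWW_Urep (g : 'M[F]_4) (w x y z : 'rV[F]_4) :
  actWW g (Urep w x y z) = Urep (w *m g) (x *m g) (y *m g) (z *m g).
Proof. by rewrite /Urep !actWW_add !actWW_tens !act2_wedge. Qed.

Lemma wedge4_mul (g : 'M[F]_4) (w x y z : 'rV[F]_4) :
  wedge4 (w *m g) (x *m g) (y *m g) (z *m g) = wedge4 w x y z * \det g.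
Proof.
rewrite /wedge4 -det_mulmx; congr (\det _).
apply/matrixP => i j; rewrite !mxE.
by case: i => [[|[|[|[|i]]]] hi] //=; rewrite mxE; apply: eq_bigr => k _; rewrite !mxE.
Qed.

End Main.

Theorem lemma3p5 (F : fieldType) (charF2 : 2%N \in [pchar F])
  (c : F) (hc : c != 0) (w x y z : 'rV[F]_4)
  (hwxyz : c * wedge4 w x y z = 1) :
  (forall w' x' y' z' : 'rV[F]_4, c * wedge4 w' x' y' z' = 1 ->
     S2eq (Urep w x y z) (Urep w' x' y' z')) /\
  (forall g : 'M[F]_4, \det g = 1 ->
     S2eq (actWW g (Urep w x y z)) (Urep w x y z)).
Proof.
split.
  move=> w' x' y' z' h'; apply: S2core.
  by apply: (mulfI hc); rewrite hwxyz h'.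
move=> g hg; rewrite actWW_Urep; apply: S2core.
by rewrite wedge4_mul hg mulr1.
Qed.
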